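(* For every finite set $\Gamma$ of IPL formulas and every IPL formula $\varphi$: $\Gamma \Vdash^{*} \varphi$ if and only if $\Gamma \vdash \varphi$ (i.e., $\varphi$ is derivable from $\Gamma$ in intuitionistic propositional logic).
   Context: Fix a denumerable set $\mathbb{A}$ of atoms. IPL formulas are built from atoms and $\bot$ using $\wedge,\vee,\to$. An atomic rule has the form $(Q_1\triangleright q_1,\dots,Q_n\triangleright q_n)\Rightarrow q$ with $n\ge 0$, $q,q_i\in\mathbb{A}$ and $Q_i$ finite (possibly empty) sets of atoms. A base is a set of atomic rules; $\mathscr{C}\supseteq\mathscr{B}$ means $\mathscr{C}$ extends $\mathscr{B}$. Derivability $\vdash_{\mathscr{B}}$ (between finite sets of atoms and atoms) is the least relation such that $S\cup\{q\}\vdash_{\mathscr{B}} q$, and if $(Q_1\triangleright q_1,\dots,Q_n\triangleright q_n)\Rightarrow q\in\mathscr{B}$ and $S\cup Q_i\vdash_{\mathscr{B}} q_i$ for all $i$, then $S\vdash_{\mathscr{B}} q$. The relation $\Vdash^{*}_{\mathscr{B}}$ is defined inductively by: (At) $\Vdash^{*}_{\mathscr{B}} p$ iff $\emptyset\vdash_{\mathscr{B}} p$; ($\to$) $\Vdash^{*}_{\mathscr{B}}\varphi\to\psi$ iff $\varphi\Vdash^{*}_{\mathscr{B}}\psi$; ($\wedge^*$) $\Vdash^{*}_{\mathscr{B}}\varphi\wedge\psi$ iff for every $\mathscr{C}\supseteq\mathscr{B}$ and every atom $p$, if $\varphi,\psi\Vdash^{*}_{\mathscr{C}} p$ then $\Vdash^{*}_{\mathscr{C}}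 p$; ($\vee$) $\Vdash^{*}_{\mathscr{B}}\varphi\vee\psi$ iff for every $\mathscr{C}\supseteq\mathscr{B}$ and every atom $p$, if $\varphi\Vdash^{*}_{\mathscr{C}} p$ and $\psi\Vdash^{*}_{\mathscr{C}} p$ then $\Vdash^{*}_{\mathscr{C}} p$; ($\bot$) $\Vdash^{*}_{\mathscr{B}}\bot$ iff $\Vdash^{*}_{\mathscr{B}} p$ for every atom $p$; (Inf) for nonempty finite $\Gamma$, $\Gamma\Vdash^{*}_{\mathscr{B}}\varphi$ iff for every $\mathscr{C}\supseteq\mathscr{B}$, if $\Vdash^{*}_{\mathscr{C}}\psi$ for all $\psi\in\Gamma$ then $\Vdash^{*}_{\mathscr{C}}\varphi$ (for empty $\Gamma$, $\Gamma\Vdash^{*}_{\mathscr{B}}\varphi$ means $\Vdash^{*}_{\mathscr{B}}\varphi$). Finally $\Gamma\Vdash^{*}\varphi$ iff $\Gamma\Vdash^{*}_{\mathscr{B}}\varphi$ for every base $\mathscr{B}$. *)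

(* Defs.v *)
(* Base-extension semantics (Sandqvist-style, with the
   modified conjunction clause ∧* ) for intuitionistic propositional logic. *)
From Stdlib Require Import List.
Import ListNotations.

Definition atom := nat.

Inductive form : Type :=
| Atom : atom -> form
| Bot : form
| And : form -> form -> form
| Or : form -> form -> form
| Imp : form -> form -> form.

(* An atomic rule (Q_1 |> q_1, ..., Q_n |> q_n) => q ; finite sets as lists. *)
Record rule : Type := mkRule {
  premises : list (list atom * atom);
  conclusion : atom
}.

Definition base := rule -> Prop.

Definition extends (C B : base) : Prop := forall r, B r -> C r.

Inductive derivable (B : base) : list atom -> atom -> Prop :=
| der_ref : forall S q, In q S -> derivable B S q
| der_rule : forall S r, B r ->
    (forall Q qi, In (Q, qi) (premises r) -> derivable B (S ++ Q) qi) ->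
    derivable B S (conclusion r).

Fixpoint supp (phi : form) (B : base) {struct phi} : Prop :=
  match phi with
  | Atom p => derivable B [] p
  | Bot => forall p, derivable B [] p
  | Imp a b =>
      (* a ||-*_B b, via (Inf) with Gamma = {a} *)
      forall C, extends C B -> supp a C -> supp b C
  | And a b =>
      forall C, extends C B -> forall p : atom,
        (forall D, extends D C -> supp a D -> supp b D -> derivable D [] p) ->
        derivable C [] p
  | Or a b =>
      forall C, extends C B -> forall p : atom,
        (forall D, extends D C -> supp a D -> derivable D [] p) ->
        (forall D, extends D C -> supp b D -> derivable D [] p) ->
        derivable C [] p
  end.

Definition supp_ctx (Gamma : list form) (B : base) (phi : form) : Prop :=
  match Gamma with
  | [] => supp phi B
  | _ :: _ => forall C, extends C B -> (forall psi, In psi Gamma -> supp psi C) -> supp phi C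
  end.

Definition valid (Gamma : list form) (phi : form) : Prop :=
  forall B : base, supp_ctx Gamma B phi.

Inductive nd : list form -> form -> Prop :=
| nd_ax : forall G a, In a G -> nd G a
| nd_botE : forall G a, nd G Bot -> nd G a
| nd_andI : forall G a b, nd G a -> nd G b -> nd G (And a b)
| nd_andE1 : forall G a b, nd G (And a b) -> nd G a
| nd_andE2 : forall G a b, nd G (And a b) -> nd G b
| nd_orI1 : forall G a b, nd G a -> nd G (Or a b)
| nd_orI2 : forall G a b, nd G b -> nd G (Or a b)
| nd_orE : forall G a b c, nd G (Or a b) -> nd (a :: G) c -> nd (b :: G) c -> nd G c
| nd_impI : forall G a b, nd (a :: G) b -> nd G (Imp a b)
| nd_impE : forall G a b, nd G (Imp a b) -> nd G a -> nd G b.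

(* Main.v *)
Require Import Defs.
From Stdlib Require Import List Lia Arith Cantor ClassicalEpsilon.
Import ListNotations.

Lemma ext_refl B : extends B B. Proof. intros r H; exact H. Qed.
Lemma ext_trans A B C : extends C B -> extends B A -> extends C A.
Proof. intros H1 H2 r H; auto. Qed.

Lemma der_mono B C S p : derivable B S p -> extends C B -> derivable C S p.
Proof.
  induction 1 as [S q Hin | S r Hr Hp IH]; intros HE.
  - now apply der_ref.
  - apply der_rule; auto.
Qed.

Lemma supp_mono a : forall B C, supp a B -> extends C B -> supp a C.
Proof.
  induction a; simpl; intros B C H HE.
  - eapply der_mono; eauto.
  - intros p; eapply der_mono; eauto.
  - intros C' H' p K. apply H; auto. eapply ext_trans; eauto.
  - intros C' H' p K1 K2. apply H; auto. eapply ext_trans; eauto.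
  - intros C' H' Ha. apply H; auto. eapply ext_trans; eauto.
Qed.

Lemma bot_elim a : forall B, supp Bot B -> supp a B.
Proof.
  induction a; simpl; intros B H.
  - apply H.
  - exact H.
  - intros C HC p _. eapply der_mono; eauto.
  - intros C HC p _ _. eapply der_mono; eauto.
  - intros C HC _. apply IHa2. intros p. eapply der_mono; eauto.
Qed.

Lemma and_elim a b c : forall B, supp (And a b) B ->
  (forall D, extends D B -> supp a D -> supp b D -> supp c D) -> supp c B.
Proof.
  induction c; simpl; intros B H K.
  - apply (H B (ext_refl B)). intros D HD Ha Hb. apply (K D HD Ha Hb).
  - intros p. apply (H B (ext_refl B)). intros D HD Ha Hb. apply (K D HD Ha Hb).
  - intros C HC p Hp. apply (H C HC). intros D HD Ha Hb.
    apply (K D (ext_trans _ _ _ HD HC) Ha Hb D (ext_refl D)).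
    intros D' HD'. apply Hp. eapply ext_trans; eauto.
  - intros C HC p Hp1 Hp2. apply (H C HC). intros D HD Ha Hb.
    apply (K D (ext_trans _ _ _ HD HC) Ha Hb D (ext_refl D));
    intros D' HD'; [apply Hp1|apply Hp2]; eapply ext_trans; eauto.
  - intros C HC Hc1. apply IHc2.
    + eapply supp_mono; eauto.
    + intros D HD Ha Hb. apply (K D (ext_trans _ _ _ HD HC) Ha Hb D (ext_refl D)).
      eapply supp_mono; eauto.
Qed.

Lemma or_elim a b c : forall B, supp (Or a b) B ->
  (forall D, extends D B -> supp a D -> supp c D) ->
  (forall D, extends D B -> supp b D -> supp c D) -> supp c B.
Proof.
  induction c; simpl; intros B H K1 K2.
  - apply (H B (ext_refl B)); intros D HD Ha; [apply (K1 D HD Ha)|apply (K2 D HD Ha)].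
  - intros p. apply (H B (ext_refl B)); intros D HD Ha; [apply (K1 D HD Ha)|apply (K2 D HD Ha)].
  - intros C HC p Hp. apply (H C HC); intros D HD Ha;
    [apply (K1 D (ext_trans _ _ _ HD HC) Ha D (ext_refl D))
    |apply (K2 D (ext_trans _ _ _ HD HC) Ha D (ext_refl D))];
    intros D' HD'; apply Hp; eapply ext_trans; eauto.
  - intros C HC p Hp1 Hp2. apply (H C HC); intros D HD Ha;
    [apply (K1 D (ext_trans _ _ _ HD HC) Ha D (ext_refl D))
    |apply (K2 D (ext_trans _ _ _ HD HC) Ha D (ext_refl D))];
    intros D' HD'; [apply Hp1|apply Hp2|apply Hp1|apply Hp2]; eapply ext_trans; eauto.
  - intros C HC Hc1. apply IHc2.
    + eapply supp_mono; eauto.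
    + intros D HD Ha. apply (K1 D (ext_trans _ _ _ HD HC) Ha D (ext_refl D)).
      eapply supp_mono; eauto.
    + intros D HD Ha. apply (K2 D (ext_trans _ _ _ HD HC) Ha D (ext_refl D)).
      eapply supp_mono; eauto.
Qed.

Definition ctx (G : list form) B := forall psi, In psi G -> supp psi B.

Lemma ctx_mono G B C : ctx G B -> extends C B -> ctx G C.
Proof. intros H HE psi Hi. eapply supp_mono; eauto. Qed.

Lemma valid_iff G phi : valid G phi <-> (forall B, ctx G B -> supp phi B).
Proof.
  unfold valid, supp_ctx, ctx; split; intros H B.
  - specialize (H B). destruct G as [|x G]; intros HG; auto.
    apply H; auto. apply ext_refl.
  - destruct G as [|x G].
    + apply H. intros psi [].
    + intros C HC HG. apply H; auto.
Qed.

Lemma soundness G a : nd G a -> forall B, ctx G B -> supp a B.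
Proof.
  induction 1; intros B HB.
  - apply HB; auto.
  - apply bot_elim; auto.
  - simpl. intros C HC p K. apply (K C (ext_refl C)); eapply supp_mono; eauto.
  - eapply and_elim; [apply IHnd; eauto|]. intros; auto.
  - eapply and_elim; [apply IHnd; eauto|]. intros; auto.
  - simpl. intros C HC p K1 K2. apply (K1 C (ext_refl C)); eapply supp_mono; eauto.
  - simpl. intros C HC p K1 K2. apply (K2 C (ext_refl C)); eapply supp_mono; eauto.
  - eapply or_elim; [apply IHnd1; eauto| |]; intros D HD Ha.
    + apply IHnd2. intros psi [<-|Hi]; auto. eapply supp_mono; eauto.
    + apply IHnd3. intros psi [<-|Hi]; auto. eapply supp_mono; eauto.
  - simpl. intros C HC Ha. apply IHnd. intros psi [<-|Hi]; auto.
    eapply supp_mono; eauto.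
  - specialize (IHnd1 B HB). simpl in IHnd1. apply (IHnd1 B (ext_refl B)); auto.
Qed.

Fixpoint enc (f : form) : nat :=
  match f with
  | Atom p => to_nat (0, p)
  | Bot => to_nat (1, 0)
  | And a b => to_nat (2, to_nat (enc a, enc b))
  | Or a b => to_nat (3, to_nat (enc a, enc b))
  | Imp a b => to_nat (4, to_nat (enc a, enc b))
  end.

Lemma to_nat_inj x y : to_nat x = to_nat y -> x = y.
Proof. intros H. rewrite <- (cancel_of_to x), <- (cancel_of_to y), H. reflexivity. Qed.

Lemma pair_inj n m x y x' y' : to_nat (n, to_nat (x, y)) = to_nat (m, to_nat (x', y')) ->
  n = m /\ x = x' /\ y = y'.
Proof.
  intros H. apply to_nat_inj in H.
  assert (E1 : n = m) by exact (f_equal fst H).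
  assert (E2 := f_equal snd H). cbn [snd] in E2. apply to_nat_inj in E2.
  split; [exact E1|]. split; [exact (f_equal fst E2)|exact (f_equal snd E2)].
Qed.

Lemma enc_inj a : forall b, enc a = enc b -> a = b.
Proof.
  induction a; destruct b; intros H; cbn [enc] in H; try reflexivity;
  try (apply to_nat_inj in H; discriminate);
  try (apply pair_inj in H; destruct H as [E [E1 E2]]; discriminate);
  try (apply pair_inj in H; destruct H as [_ [E1 E2]]; f_equal; auto).
  apply to_nat_inj in H. f_equal. exact (f_equal snd H).
Qed.

Section Compl.
Variable M : nat.

Definition fl (f : form) : atom :=
  match f with Atom p => p | _ => M + enc f end.

Fixpoint bnd (f : form) : Prop :=
  match f with
  | Atom p => p < M
  | Bot => True
  | And a b | Or a b | Imp a b => bnd a /\ bnd b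
  end.

Lemma fl_inj a b : bnd a -> bnd b -> fl a = fl b -> a = b.
Proof.
  intros Ha Hb H.
  destruct a; destruct b; unfold fl in H; cbn [bnd] in *; try (subst; reflexivity); try lia;
  apply enc_inj; lia.
Qed.

Definition g (q : atom) : form :=
  match excluded_middle_informative (exists f, bnd f /\ fl f = q) with
  | left H => proj1_sig (constructive_indefinite_description _ H)
  | right _ => Atom q
  end.

Lemma g_fl f : bnd f -> g (fl f) = f.
Proof.
  intros Hf. unfold g. destruct excluded_middle_informative as [H|H].
  - destruct (constructive_indefinite_description _ H) as [x [Hx Hxe]]. simpl.
    apply fl_inj; auto.
  - exfalso. apply H. eauto.
Qed.

Inductive Nrule : rule -> Prop :=
| rAndI a b : bnd a -> bnd b -> Nrule (mkRule [([], fl a); ([], fl b)] (fl (And a b)))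
| rAndE1 a b : bnd a -> bnd b -> Nrule (mkRule [([], fl (And a b))] (fl a))
| rAndE2 a b : bnd a -> bnd b -> Nrule (mkRule [([], fl (And a b))] (fl b))
| rOrI1 a b : bnd a -> bnd b -> Nrule (mkRule [([], fl a)] (fl (Or a b)))
| rOrI2 a b : bnd a -> bnd b -> Nrule (mkRule [([], fl b)] (fl (Or a b)))
| rOrE a b p : bnd a -> bnd b ->
    Nrule (mkRule [([], fl (Or a b)); ([fl a], p); ([fl b], p)] p)
| rImpI a b : bnd a -> bnd b -> Nrule (mkRule [([fl a], fl b)] (fl (Imp a b)))
| rImpE a b : bnd a -> bnd b -> Nrule (mkRule [([], fl (Imp a b)); ([], fl a)] (fl b))
| rBot p : Nrule (mkRule [([], fl Bot)] p).

Lemma app_rule C S prem c : C (mkRule prem c) ->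
  (forall Q qi, In (Q, qi) prem -> derivable C (S ++ Q) qi) -> derivable C S c.
Proof. intros H K. exact (der_rule C S (mkRule prem c) H K). Qed.

End Compl.

Definition extA (C : base) (S0 : list atom) : base :=
  fun r => C r \/ (premises r = [] /\ In (conclusion r) S0).

Lemma extA_ext C S0 : extends (extA C S0) C.
Proof. intros r H; left; exact H. Qed.

Lemma extA_ax C S0 q : In q S0 -> derivable (extA C S0) [] q.
Proof.
  intros H. apply (app_rule _ [] [] q).
  - right; simpl; auto.
  - intros Q qi [].
Qed.

Lemma ded C S0 S p : derivable (extA C S0) S p -> derivable C (S0 ++ S) p.
Proof.
  induction 1 as [S q Hin | S r [Hr|[Hr1 Hr2]] Hp IH].
  - apply der_ref. apply in_or_app; auto.
  - apply der_rule; auto. intros Q qi Hi. rewrite <- app_assoc. auto.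
  - apply der_ref. apply in_or_app; auto.
Qed.

Lemma key M : forall f C, bnd M f -> extends C (Nrule M) ->
  (supp f C <-> derivable C [] (fl M f)).
Proof.
  induction f; intros C Hb HC; simpl in Hb.
  - simpl. tauto.
  - simpl. split; intros H.
    + apply H.
    + intros p. apply (app_rule _ _ _ _ (HC _ (rBot M p))).
      intros Q qi [E|[]]. injection E; intros; subst. exact H.
  - destruct Hb as [Ha Hb']. simpl. split; intros H.
    + apply (H C (ext_refl C)). intros D HD Sa Sb.
      assert (HDN : extends D (Nrule M)) by (eapply ext_trans; eauto).
      apply (app_rule _ _ _ _ (HDN _ (rAndI M f1 f2 Ha Hb'))).
      intros Q qi [E|[E|[]]]; injection E; intros; subst; simpl.
      * apply (IHf1 D Ha HDN); auto.
      * apply (IHf2 D Hb' HDN); auto.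
    + intros C' HC' p K. assert (HCN : extends C' (Nrule M)) by (eapply ext_trans; eauto).
      apply (K C' (ext_refl C')).
      * apply (IHf1 C' Ha HCN).
        apply (app_rule _ _ _ _ (HCN _ (rAndE1 M f1 f2 Ha Hb'))).
        intros Q qi [E|[]]; injection E; intros; subst; simpl. eapply der_mono; eauto.
      * apply (IHf2 C' Hb' HCN).
        apply (app_rule _ _ _ _ (HCN _ (rAndE2 M f1 f2 Ha Hb'))).
        intros Q qi [E|[]]; injection E; intros; subst; simpl. eapply der_mono; eauto.
  - destruct Hb as [Ha Hb']. simpl. split; intros H.
    + apply (H C (ext_refl C)); intros D HD Sa;
      assert (HDN : extends D (Nrule M)) by (eapply ext_trans; eauto).
      * apply (app_rule _ _ _ _ (HDN _ (rOrI1 M f1 f2 Ha Hb'))).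
        intros Q qi [E|[]]; injection E; intros; subst; simpl.
        apply (IHf1 D Ha HDN); auto.
      * apply (app_rule _ _ _ _ (HDN _ (rOrI2 M f1 f2 Ha Hb'))).
        intros Q qi [E|[]]; injection E; intros; subst; simpl.
        apply (IHf2 D Hb' HDN); auto.
    + intros C' HC' p K1 K2. assert (HCN : extends C' (Nrule M)) by (eapply ext_trans; eauto).
      apply (app_rule _ _ _ _ (HCN _ (rOrE M f1 f2 p Ha Hb'))).
      intros Q qi [E|[E|[E|[]]]]; injection E; intros; subst; simpl.
      * eapply der_mono; eauto.
      * replace [fl M f1] with ([fl M f1] ++ []) by reflexivity. apply ded.
        apply K1. apply extA_ext. apply (IHf1 _ Ha).
        { eapply ext_trans; [apply extA_ext|exact HCN]. }
        apply extA_ax; simpl; auto.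
      * replace [fl M f2] with ([fl M f2] ++ []) by reflexivity. apply ded.
        apply K2. apply extA_ext. apply (IHf2 _ Hb').
        { eapply ext_trans; [apply extA_ext|exact HCN]. }
        apply extA_ax; simpl; auto.
  - destruct Hb as [Ha Hb']. simpl. split; intros H.
    + apply (app_rule _ _ _ _ (HC _ (rImpI M f1 f2 Ha Hb'))).
      intros Q qi [E|[]]; injection E; intros; subst; simpl.
      replace [fl M f1] with ([fl M f1] ++ []) by reflexivity. apply ded.
      assert (HEN : extends (extA C [fl M f1]) (Nrule M))
        by (eapply ext_trans; [apply extA_ext|exact HC]).
      apply (IHf2 _ Hb' HEN). apply H. apply extA_ext.
      apply (IHf1 _ Ha HEN). apply extA_ax; simpl; auto.
    + intros C' HC' Sa. assert (HCN : extends C' (Nrule M)) by (eapply ext_trans; eauto).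
      apply (IHf2 C' Hb' HCN).
      apply (app_rule _ _ _ _ (HCN _ (rImpE M f1 f2 Ha Hb'))).
      intros Q qi [E|[E|[]]]; injection E; intros; subst; simpl.
      * eapply der_mono; eauto.
      * apply (IHf1 C' Ha HCN); auto.
Qed.

Lemma nd_weaken G a : nd G a -> forall G', (forall x, In x G -> In x G') -> nd G' a.
Proof.
  induction 1; intros G' HG.
  - apply nd_ax; auto.
  - apply nd_botE; auto.
  - apply nd_andI; auto.
  - eapply nd_andE1; eauto.
  - eapply nd_andE2; eauto.
  - apply nd_orI1; auto.
  - apply nd_orI2; auto.
  - eapply nd_orE; [apply IHnd1; auto| apply IHnd2 | apply IHnd3];
      intros x [<-|Hx]; simpl; auto.
  - apply nd_impI. apply IHnd. intros x [<-|Hx]; simpl; auto.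
  - eapply nd_impE; eauto.
Qed.

Lemma interp M S p : derivable (Nrule M) S p -> nd (map (g M) S) (g M p).
Proof.
  induction 1 as [S q Hin | S r Hr Hp IH].
  - apply nd_ax. apply in_map; auto.
  - destruct Hr; cbn [premises conclusion In] in *.
    + assert (A1 := IH _ _ (or_introl eq_refl)).
      assert (A2 := IH _ _ (or_intror (or_introl eq_refl))).
      rewrite app_nil_r in A1, A2. rewrite g_fl in A1, A2 by auto.
      rewrite g_fl by (simpl; auto). apply nd_andI; auto.
    + assert (A1 := IH _ _ (or_introl eq_refl)). rewrite app_nil_r in A1.
      rewrite g_fl in A1 by (simpl; auto). rewrite g_fl by auto. eapply nd_andE1; eauto.
    + assert (A1 := IH _ _ (or_introl eq_refl)). rewrite app_nil_r in A1.
      rewrite g_fl in A1 by (simpl; auto). rewrite g_fl by auto. eapply nd_andE2; eauto.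
    + assert (A1 := IH _ _ (or_introl eq_refl)). rewrite app_nil_r in A1.
      rewrite g_fl in A1 by auto. rewrite g_fl by (simpl; auto). apply nd_orI1; auto.
    + assert (A1 := IH _ _ (or_introl eq_refl)). rewrite app_nil_r in A1.
      rewrite g_fl in A1 by auto. rewrite g_fl by (simpl; auto). apply nd_orI2; auto.
    + assert (A1 := IH _ _ (or_introl eq_refl)).
      assert (A2 := IH _ _ (or_intror (or_introl eq_refl))).
      assert (A3 := IH _ _ (or_intror (or_intror (or_introl eq_refl)))).
      rewrite app_nil_r in A1. rewrite map_app in A2, A3. simpl in A2, A3.
      rewrite g_fl in A1 by (simpl; auto). rewrite g_fl in A2, A3 by auto.
      eapply nd_orE; [exact A1|apply (nd_weaken _ _ A2)|apply (nd_weaken _ _ A3)];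
        intros x Hx; apply in_app_or in Hx; simpl; destruct Hx as [Hx|[<-|[]]]; auto.
    + assert (A1 := IH _ _ (or_introl eq_refl)). rewrite map_app in A1. simpl in A1.
      rewrite !g_fl in A1 by auto. rewrite g_fl by (simpl; auto). apply nd_impI.
      eapply nd_weaken; eauto.
      intros x Hx; apply in_app_or in Hx; simpl; destruct Hx as [Hx|[<-|[]]]; auto.
    + assert (A1 := IH _ _ (or_introl eq_refl)).
      assert (A2 := IH _ _ (or_intror (or_introl eq_refl))).
      rewrite app_nil_r in A1, A2. rewrite g_fl in A1 by (simpl; auto).
      rewrite g_fl in A2 by auto. rewrite g_fl by auto. eapply nd_impE; eauto.
    + assert (A1 := IH _ _ (or_introl eq_refl)). rewrite app_nil_r in A1.
      rewrite g_fl in A1 by (simpl; auto). apply nd_botE; auto.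
Qed.

Fixpoint maxat (f : form) : nat :=
  match f with
  | Atom p => p
  | Bot => 0
  | And a b | Or a b | Imp a b => Nat.max (maxat a) (maxat b)
  end.

Lemma bnd_max M f : maxat f < M -> bnd M f.
Proof. induction f; simpl; intros; try split; auto; try apply IHf1; try apply IHf2; lia. Qed.

Fixpoint mx (l : list form) : nat :=
  match l with [] => 0 | a :: l => Nat.max (maxat a) (mx l) end.

Lemma mx_in a l : In a l -> maxat a <= mx l.
Proof. induction l; simpl; [intros []|]. intros [<-|H]; [|specialize (IHl H)]; lia. Qed.

Lemma completeness G phi : valid G phi -> nd G phi.
Proof.
  intros H. rewrite valid_iff in H.
  set (M := S (mx (phi :: G))).
  assert (Hb : forall f, In f (phi :: G) -> bnd M f).
  { intros f Hf. apply bnd_max. apply mx_in in Hf. unfold M. lia. }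
  set (C := extA (Nrule M) (map (fl M) G)).
  assert (HCN : extends C (Nrule M)) by apply extA_ext.
  assert (Hsupp : supp phi C).
  { apply H. intros psi Hpsi. apply (key M psi C (Hb psi (or_intror Hpsi)) HCN).
    apply extA_ax. apply in_map; auto. }
  apply (key M phi C (Hb phi (or_introl eq_refl)) HCN) in Hsupp.
  apply ded in Hsupp. rewrite app_nil_r in Hsupp.
  apply interp in Hsupp. rewrite map_map, g_fl in Hsupp by (apply Hb; simpl; auto).
  erewrite map_ext_in in Hsupp. rewrite map_id in Hsupp. exact Hsupp.
  intros a Ha. apply g_fl. apply Hb. simpl; auto.
Qed.

Theorem theorem2 : forall (Gamma : list form) (phi : form),
  valid Gamma phi <-> nd Gamma phi.
Proof.
  intros G phi. split.
  - apply completeness.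
  - intros H. rewrite valid_iff. apply soundness; auto.
Qed.
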